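(* Let $g:\mathbb{C}\to\mathbb{C}$ be holomorphic at $0$ with $g(0)=0$ and $g'(0)\neq 0$, let $\varphi:\mathbb{N}\to\mathbb{C}\setminus\{0\}$, and let $a$ be a real number. Let $(P_n(x))_{n\ge 0}$ be a sequence of Appell polynomials of type $(g,\varphi)$ with generating function $f$, i.e. $f$ is holomorphic at $0$, $f(0)\neq 0$, and $$\sum_{n\ge 0}P_n(x)\frac{t^n}{\varphi(0)\varphi(1)\cdots\varphi(n)}=f(t)e^{x g(t)}$$ for all $x\in\mathbb{C}$ and all $t$ near $0$. Put $h(t)=f(t)e^{\frac{a}{2}g(t)}$. Then $P_n(a-x)=(-1)^nP_n(x)$ for all $n\ge 0$ and all $x$ if and only if $g$ is an odd function and $h$ is an even function (near $0$).
   Context: Here $\mathbb{N}=\{0,1,2,\dots\}$. A sequence of polynomials $(P_n)_n$ is called a sequence of Appell polynomials of type $(g,\varphi)$ if there exists a function $f$ holomorphic at $0$ with $f(0)\neq0$ (its generating function) such that the displayed generating-function identity holds. *)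

(* Defs.v *)
From Stdlib Require Import Reals.
From Coquelicot Require Export Coquelicot.
Open Scope C_scope.

Definition cderiv (f : C -> C) (z l : C) : Prop :=
  @is_derive C_AbsRing C_NormedModule f z l.

Definition holomorphic_at0 (f : C -> C) : Prop :=
  exists r : R, (0 < r)%R /\ forall z : C, (Cmod z < r)%R -> exists l, cderiv f z l.

Definition cexp (z : C) : C :=
  (exp (Re z) * cos (Im z), exp (Re z) * sin (Im z))%R.

Fixpoint cpow (z : C) (n : nat) : C :=
  match n with O => 1 | S m => z * cpow z m end.

Fixpoint phiprod (phi : nat -> C) (n : nat) : C :=
  match n with O => phi O | S m => phiprod phi m * phi (S m) end.

Definition is_poly_fun (p : C -> C) : Prop :=
  exists (d : nat) (c : nat -> C), forall x : C,
    p x = sum_n (fun k => c k * cpow x k) d.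

Definition appell_gen (g : C -> C) (phi : nat -> C) (P : nat -> C -> C)
    (f : C -> C) : Prop :=
  (forall n, is_poly_fun (P n)) /\
  holomorphic_at0 f /\ f 0 <> 0 /\
  forall x : C, exists r : R, (0 < r)%R /\ forall t : C, (Cmod t < r)%R ->
    is_series (fun n => P n x * cpow t n / phiprod phi n) (f t * cexp (x * g t)).

(* Main.v *)
Require Import Defs.
From Stdlib Require Import Reals Lra Lia.
From Coquelicot Require Import Coquelicot.
Open Scope C_scope.


Lemma cexp_add (u v : C) : cexp (u + v) = cexp u * cexp v.
Proof.
  destruct u as [u1 u2], v as [v1 v2]; unfold cexp, Cmult; simpl.
  rewrite exp_plus, cos_plus, sin_plus. f_equal; ring.
Qed.

Lemma cexp_0 : cexp 0 = 1.
Proof. unfold cexp; simpl. rewrite exp_0, cos_0, sin_0. unfold RtoC. f_equal; ring. Qed.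

Lemma cexp_neq0 (u : C) : cexp u <> 0.
Proof.
  intro H. assert (H1 := f_equal fst H). assert (H2 := f_equal snd H).
  unfold cexp in *; simpl in *; unfold Re, Im in *.
  assert (E := exp_pos (fst u)).
  apply Rmult_integral in H1; apply Rmult_integral in H2.
  destruct H1; [lra|]. destruct H2; [lra|].
  apply (cos_sin_0 (snd u)); auto.
Qed.

Lemma cexp_eq1_small (w : C) : cexp w = 1 -> (Cmod w < PI)%R -> w = 0.
Proof.
  intros H Hm. assert (H1 := f_equal fst H). assert (H2 := f_equal snd H).
  unfold cexp in *; simpl in *; unfold Re, Im in *.
  assert (E := exp_pos (fst w)).
  assert (Hb := Rmax_Cmod w).
  assert (Hs : sin (snd w) = 0%R).
  { apply Rmult_integral in H2. destruct H2; [lra|auto]. }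
  apply sin_eq_0_0 in Hs. destruct Hs as [k Hk].
  assert (Ha : (Rabs (snd w) < PI)%R).
  { eapply Rle_lt_trans; [|exact Hm]. eapply Rle_trans; [|exact Hb]. apply Rmax_r. }
  assert (k = 0%Z).
  { destruct (Z.eq_dec k 0) as [|Hn]; auto. exfalso.
    assert (1 <= Rabs (IZR k))%R.
    { rewrite <- abs_IZR. apply IZR_le. lia. }
    rewrite Hk, Rabs_mult, (Rabs_right PI) in Ha by (left; apply PI_RGT_0).
    assert (P := PI_RGT_0). nra. }
  subst k. rewrite Rmult_0_l in Hk.
  rewrite Hk, cos_0, Rmult_1_r in H1.
  assert (fst w = 0%R).
  { rewrite <- exp_0 in H1. apply exp_inv in H1. auto. }
  destruct w as [w1 w2]; simpl in *; subst; reflexivity.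
Qed.

Lemma cpow_opp (t : C) n : cpow (- t) n = cpow (-1) n * cpow t n.
Proof. induction n; simpl. ring. rewrite IHn. ring. Qed.

Lemma cpow_real (t : R) n : cpow (RtoC t) n = RtoC (t ^ n).
Proof. induction n; simpl. reflexivity. rewrite IHn, RtoC_mult. reflexivity. Qed.

Lemma phiprod_neq0 (phi : nat -> C) : (forall n, phi n <> 0) -> forall n, phiprod phi n <> 0.
Proof.
  intros H n; induction n; cbn [phiprod]; auto.
  intro E. apply (f_equal Cmod) in E. rewrite Cmod_mult, Cmod_0 in E.
  apply Rmult_integral in E. destruct E as [E|E]; apply Cmod_eq_0 in E; auto.
  apply (H (S n)); auto.
Qed.

Lemma real_ps_unique (b : nat -> R) (r : R) : (0 < r)%R ->
  (forall t : R, (Rabs t < r)%R -> is_series (fun n => b n * t ^ n)%R 0%R) ->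
  forall n, b n = 0%R.
Proof.
  intros Hr H n.
  assert (Hrad : Rbar_lt 0%R (CV_radius b)).
  { assert (Ht : (Rabs (r/2) < r)%R) by (rewrite Rabs_right; lra).
    assert (Hs := H _ Ht).
    assert (Hl : is_lim_seq (fun n => b n * (r/2) ^ n)%R 0%R).
    { apply ex_series_lim_0. eexists; exact Hs. }
    destruct (filterlim_bounded (K:=R_AbsRing) (V:=R_NormedModule) (fun n => b n * (r/2) ^ n)%R) as [M HM].
    { exists 0%R. exact Hl. }
    destruct (CV_radius_bounded b) as [Hub _].
    assert (Hle : Rbar_le (r/2)%R (CV_radius b)).
    { apply Hub. exists M. intro k. apply HM. }
    eapply Rbar_lt_le_trans; [|exact Hle]. simpl. lra. }
  assert (Hloc : locally 0%R (fun t => PSeries b t = 0%R)).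
  { exists (mkposreal r Hr). intros t Ht.
    unfold PSeries. apply is_series_unique. apply H.
    change (Rabs (t - 0) < r)%R in Ht. rewrite Rminus_0_r in Ht. exact Ht. }
  assert (Hd := Derive_n_coef b n Hrad).
  rewrite (Derive_n_ext_loc _ (fun _ => 0%R) n 0%R Hloc) in Hd.
  assert (Hf := INR_fact_neq_0 n).
  destruct n as [|n].
  - simpl in Hd. simpl in Hf. lra.
  - rewrite Derive_n_const in Hd. symmetry in Hd.
    apply Rmult_integral in Hd. destruct Hd; auto. contradiction.
Qed.

Lemma sum_n_fst (u : nat -> C) n : fst (sum_n u n) = sum_n (fun k => fst (u k)) n.
Proof.
  induction n. rewrite !sum_O. reflexivity.
  rewrite !sum_Sn, <- IHn. reflexivity.
Qed.

Lemma sum_n_snd (u : nat -> C) n : snd (sum_n u n) = sum_n (fun k => snd (u k)) n.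
Proof.
  induction n. rewrite !sum_O. reflexivity.
  rewrite !sum_Sn, <- IHn. reflexivity.
Qed.

Lemma is_series_fst (u : nat -> C) (l : C) : is_series u l -> is_series (fun n => fst (u n)) (fst l).
Proof.
  unfold is_series. intro H. apply filterlim_locally. intro eps.
  destruct (proj1 (filterlim_locally _ _) H eps) as [N HN]. exists N. intros k Hk. destruct (HN k Hk) as [H1 _].
  rewrite <- sum_n_fst. exact H1.
Qed.

Lemma is_series_snd (u : nat -> C) (l : C) : is_series u l -> is_series (fun n => snd (u n)) (snd l).
Proof.
  unfold is_series. intro H. apply filterlim_locally. intro eps.
  destruct (proj1 (filterlim_locally _ _) H eps) as [N HN]. exists N. intros k Hk. destruct (HN k Hk) as [_ H1].
  rewrite <- sum_n_snd. exact H1.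
Qed.

Lemma complex_ps_unique (b : nat -> C) (r : R) : (0 < r)%R ->
  (forall t : C, (Cmod t < r)%R -> is_series (fun n => b n * cpow t n) (0 : C)) ->
  forall n, b n = 0.
Proof.
  intros Hr H n.
  assert (Hfst : forall n, fst (b n) = 0%R).
  { apply (real_ps_unique _ r Hr). intros t Ht.
    assert (Ht' : (Cmod (RtoC t) < r)%R) by (rewrite Cmod_R; exact Ht).
    apply H, is_series_fst in Ht'.
    eapply is_series_ext; [|exact Ht'].
    intro k. simpl. rewrite cpow_real. destruct (b k). simpl. ring. }
  assert (Hsnd : forall n, snd (b n) = 0%R).
  { apply (real_ps_unique _ r Hr). intros t Ht.
    assert (Ht' : (Cmod (RtoC t) < r)%R) by (rewrite Cmod_R; exact Ht).
    apply H, is_series_snd in Ht'.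
    eapply is_series_ext; [|exact Ht'].
    intro k. simpl. rewrite cpow_real. destruct (b k). simpl. ring. }
  specialize (Hfst n); specialize (Hsnd n). destruct (b n); simpl in *; subst; reflexivity.
Qed.


Lemma holo_cont (f : C -> C) : holomorphic_at0 f ->
  forall eps : R, (0 < eps)%R -> exists d : R, (0 < d)%R /\
    forall t : C, (Cmod t < d)%R -> (Cmod (f t - f 0) < eps)%R.
Proof.
  intros [r [Hr Hd]] eps He.
  destruct (Hd 0) as [l Hl]. { rewrite Cmod_0; exact Hr. }
  assert (Hc := ex_derive_continuous (K:=C_AbsRing) (V:=C_NormedModule) f (RtoC 0) (ex_intro _ l Hl)).
  assert (H1 : locally (f 0) (ball_norm (f 0) eps)).
  { apply (locally_le_locally_norm (K:=C_AbsRing) (V:=C_NormedModule)). apply (locally_norm_ball_norm (K:=C_AbsRing) (V:=C_NormedModule) _ (mkposreal eps He)). }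
  specialize (Hc _ H1).
  unfold filtermap in Hc. apply locally_C in Hc. apply (locally_norm_le_locally (K:=C_AbsRing) (V:=C_NormedModule)) in Hc. destruct Hc as [d Hd'].
  exists d. split. apply cond_pos. intros t Ht.
  specialize (Hd' t). unfold ball_norm in Hd'.
  change (Cmod (t - 0) < d -> Cmod (f t - f 0) < eps)%R in Hd'. apply Hd'.
  replace (t - 0) with t by ring. exact Ht.
Qed.

Lemma is_series_C_unique (u : nat -> C) (l1 l2 : C) : is_series u l1 -> is_series u l2 -> l1 = l2.
Proof. intros H1 H2. exact (filterlim_locally_unique (K:=C_AbsRing) (V:=C_NormedModule) (sum_n u) l1 l2 H1 H2). Qed.

Lemma RtoC_half (a : R) : RtoC a = RtoC (a / 2) + RtoC (a / 2).
Proof. rewrite <- RtoC_plus. f_equal. field. Qed.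

Theorem mainTheorem1 (g : C -> C) (phi : nat -> C) (a : R)
  (P : nat -> C -> C) (f : C -> C) :
  holomorphic_at0 g -> g 0 = 0 -> (exists l : C, cderiv g 0 l /\ l <> 0) ->
  (forall n, phi n <> 0) ->
  appell_gen g phi P f ->
  ((forall (n : nat) (x : C), P n (RtoC a - x) = cpow (-1) n * P n x) <->
   exists r : R, (0 < r)%R /\ forall t : C, (Cmod t < r)%R ->
     g (- t) = - g t /\
     f (- t) * cexp (RtoC (a / 2) * g (- t)) = f t * cexp (RtoC (a / 2) * g t)).
Proof.
  intros Hg Hg0 _ Hphi [HP [Hf [Hf0 Hs]]].
  assert (Hc := phiprod_neq0 phi Hphi).
  split.
  - intro H.
    assert (E : forall x, exists r, (0 < r)%R /\ forall t, (Cmod t < r)%R ->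
              f t * cexp ((RtoC a - x) * g t) = f (-t) * cexp (x * g (-t))).
    { intro x. destruct (Hs (RtoC a - x)) as [r1 [Hr1 H1]]. destruct (Hs x) as [r2 [Hr2 H2]].
      exists (Rmin r1 r2). split. apply Rmin_glb_lt; auto. intros t Ht.
      assert (Ht1 : (Cmod t < r1)%R) by (eapply Rlt_le_trans; [exact Ht| apply Rmin_l]).
      assert (Ht2 : (Cmod (-t) < r2)%R) by (rewrite Cmod_opp; eapply Rlt_le_trans; [exact Ht| apply Rmin_r]).
      specialize (H1 t Ht1). specialize (H2 _ Ht2).
      apply (is_series_C_unique _ _ _ H1).
      eapply is_series_ext; [|exact H2].
      intro n. cbv beta. rewrite H, cpow_opp. unfold Cdiv. match goal with |- ?u = ?v => enough (EE : @eq C u v) by exact EE end. ring. }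
    destruct (E (RtoC (a/2))) as [r1 [Hr1 E1]].
    destruct (E (RtoC (a/2) + 1)) as [r2 [Hr2 E2]].
    destruct (holo_cont g Hg 1%R Rlt_0_1) as [d1 [Hd1 D1]].
    assert (Hf0m : (0 < Cmod (f 0))%R).
    { destruct (Cmod_ge_0 (f 0)) as [h|h]; auto. exfalso. apply Hf0. apply Cmod_eq_0. auto. }
    destruct (holo_cont f Hf _ Hf0m) as [d2 [Hd2 D2]].
    exists (Rmin (Rmin r1 r2) (Rmin d1 d2)). split.
    { repeat apply Rmin_glb_lt; auto. }
    intros t Ht.
    assert (Hm := Rmin_l (Rmin r1 r2) (Rmin d1 d2)).
    assert (Hm' := Rmin_r (Rmin r1 r2) (Rmin d1 d2)).
    assert (Ha := Rmin_l r1 r2). assert (Hb := Rmin_r r1 r2).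
    assert (Hc' := Rmin_l d1 d2). assert (Hd := Rmin_r d1 d2).
    assert (E1t := E1 t ltac:(lra)). assert (E2t := E2 t ltac:(lra)).
    assert (G1 := D1 t ltac:(lra)). assert (G2 := D1 (-t) ltac:(rewrite Cmod_opp; lra)).
    assert (F1 := D2 t ltac:(lra)).
    rewrite Hg0 in G1, G2.
    replace (g t - 0) with (g t) in G1 by ring.
    replace (g (-t) - 0) with (g (-t)) in G2 by ring.
    assert (Hft : f t <> 0).
    { intro Z. rewrite Z in F1. replace (0 - f 0) with (- f 0) in F1 by ring.
      rewrite Cmod_opp in F1. lra. }
    replace (RtoC a - RtoC (a/2)) with (RtoC (a/2)) in E1t
      by (rewrite (RtoC_half a) at 1; ring).
    split; [|symmetry; exact E1t].
    set (G := g t) in *. set (G' := g (-t)) in *.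
    replace ((RtoC a - (RtoC (a / 2) + 1)) * G) with (RtoC (a/2) * G + - G) in E2t
      by (rewrite (RtoC_half a); ring).
    replace ((RtoC (a / 2) + 1) * G') with (RtoC (a/2) * G' + G') in E2t by ring.
    rewrite !cexp_add in E2t.
    assert (Hne : f t * cexp (RtoC (a / 2) * G) <> 0).
    { intro Z. apply (f_equal Cmod) in Z. rewrite Cmod_mult, Cmod_0 in Z.
      apply Rmult_integral in Z. destruct Z as [Z|Z]; apply Cmod_eq_0 in Z.
      - contradiction. - apply (cexp_neq0 _ Z). }
    assert (Hx : cexp (- G) = cexp G').
    { assert (E3 : f t * cexp (RtoC (a / 2) * G) * cexp (- G) = f t * cexp (RtoC (a / 2) * G) * cexp G').
      { rewrite E1t at 2. rewrite <- !Cmult_assoc. exact E2t. }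
      replace (cexp (- G)) with (/ (f t * cexp (RtoC (a / 2) * G)) * (f t * cexp (RtoC (a / 2) * G) * cexp (- G)))
        by (field; split; [apply cexp_neq0|exact Hft]).
      rewrite E3. field. split; [apply cexp_neq0|exact Hft]. }
    assert (Hw : cexp (G + G') = 1).
    { rewrite cexp_add, <- Hx, <- cexp_add. replace (G + - G) with (RtoC 0) by ring. apply cexp_0. }
    apply cexp_eq1_small in Hw.
    + replace G' with ((G + G') - G) by ring. rewrite Hw. ring.
    + eapply Rle_lt_trans; [apply Cmod_triangle|]. assert (Hpi := PI2_1). lra.
  - intros [r0 [Hr0 Hodd]] n x.
    destruct (Hs (RtoC a - x)) as [r1 [Hr1 H1]]. destruct (Hs x) as [r2 [Hr2 H2]].
    set (r := Rmin r0 (Rmin r1 r2)).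
    assert (Hr : (0 < r)%R) by (unfold r; repeat apply Rmin_glb_lt; auto).
    set (b := fun k => (P k (RtoC a - x) - cpow (-1) k * P k x) / phiprod phi k).
    assert (Hb : forall k, b k = 0).
    { apply (complex_ps_unique b r Hr). intros t Ht.
      assert (Ha := Rmin_l r0 (Rmin r1 r2)). assert (Hb := Rmin_r r0 (Rmin r1 r2)).
      assert (Hc1 := Rmin_l r1 r2). assert (Hd := Rmin_r r1 r2). fold r in Ha, Hb.
      assert (S1 := H1 t ltac:(lra)).
      assert (S2 := H2 (-t) ltac:(rewrite Cmod_opp; lra)).
      destruct (Hodd t ltac:(lra)) as [Ho He].
      assert (Key : f t * cexp ((RtoC a - x) * g t) = f (- t) * cexp (x * g (- t))).
      { replace (cexp (x * g (-t))) with (cexp (RtoC (a/2) * g (-t)) * cexp (RtoC (a/2) * g t + - (x * g t)))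
          by (rewrite <- cexp_add; f_equal; rewrite Ho; ring).
        transitivity (f (-t) * cexp (RtoC (a/2) * g (-t)) * cexp (RtoC (a/2) * g t + - (x * g t))); [|ring].
        rewrite He. rewrite <- Cmult_assoc, <- cexp_add.
        f_equal. f_equal. rewrite (RtoC_half a) at 1. ring. }
      assert (S3 := is_series_minus _ _ _ _ S1 S2).
      eapply is_series_ext; [|
        replace (0 : C) with (plus (f t * cexp ((RtoC a - x) * g t)) (opp (f (- t) * cexp (x * g (- t)))));
        [exact S3|]].
      + intro k. unfold b. simpl. change (plus ?u ?v) with (Cplus u v). change (opp ?u) with (Copp u).
        rewrite cpow_opp. field. apply Hc.
      + rewrite Key. change (plus ?u ?v) with (Cplus u v). change (opp ?u) with (Copp u). match goal with |- ?u = ?v => enough (EE : @eq C u v) by exact EE end. ring. }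
    specialize (Hb n). unfold b in Hb.
    assert (Z : P n (RtoC a - x) - cpow (-1) n * P n x = 0).
    { replace (P n (RtoC a - x) - cpow (-1) n * P n x)
        with ((P n (RtoC a - x) - cpow (-1) n * P n x) / phiprod phi n * phiprod phi n)
        by (field; apply Hc).
      rewrite Hb. ring. }
    replace (P n (RtoC a - x)) with ((P n (RtoC a - x) - cpow (-1) n * P n x) + cpow (-1) n * P n x) by ring.
    rewrite Z. ring.
Qed.
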